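(* For every bounded measurable $G:[0,a^*]\to[0,\infty[$ with $G\ge4\pi$ a.e. and every $\beta>0$, $\kappa_1(G,\beta)<\beta$.
   Context: $\kappa_1(G,\beta):=\inf_{f\in\mathcal F_G\setminus\{0\}}\frac{\int_0^{a^*}\left(aG(a)|f'(a)|^2+\frac{\beta^2a}{G(a)}|f(a)|^2\right)da}{\int_0^{a^*}|f(a)|^2da}$, where $\mathcal F_G$ is the set of $f\in L^2(]0,a^*[)$ whose distributional derivative satisfies $\int_0^{a^*}|f'|^2aG\,da<\infty$. *)

(* Defs.v *)
From HB Require Import structures.
From mathcomp Require Import all_boot all_order all_algebra.
From mathcomp Require Import all_classical all_reals all_analysis.
Set Implicit Arguments. Unset Strict Implicit. Unset Printing Implicit Defensive.
Import Order.TTheory GRing.Theory Num.Theory.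
Import numFieldNormedType.Exports.
Local Open Scope classical_set_scope.
Local Open Scope ring_scope.

Section Defs.
Variable R : realType.
Local Notation mu := (@lebesgue_measure R).

Definition oI (astar : R) : set R := `]0, astar[.

Definition test_fun (astar : R) (phi : R -> R) : Prop :=
  (forall (n : nat) (x : R), derivable (derive1n n phi) x 1) /\
  exists c d : R, 0 < c /\ c < d /\ d < astar /\
    (forall x : R, (x < c \/ d < x) -> phi x = 0).

Definition loc_integrable (astar : R) (g : R -> R) : Prop :=
  forall c d : R, 0 < c -> c < d -> d < astar ->
    mu.-integrable `[c, d] (fun x => (g x)%:E).

Definition distr_deriv (astar : R) (f g : R -> R) : Prop :=
  loc_integrable astar g /\
  forall phi : R -> R, test_fun astar phi ->
    (\int[mu]_(x in oI astar) (f x * derive1 phi x)%:E =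
     - \int[mu]_(x in oI astar) (g x * phi x)%:E)%E.

Definition L2 (astar : R) (f : R -> R) : Prop :=
  measurable_fun (oI astar) f /\
  (\int[mu]_(x in oI astar) ((f x) ^+ 2)%:E < +oo)%E.

Definition in_FG (astar : R) (G : R -> R) (f g : R -> R) : Prop :=
  L2 astar f /\ distr_deriv astar f g /\
  (\int[mu]_(x in oI astar) ((g x) ^+ 2 * x * G x)%:E < +oo)%E.

Definition nonzero_L2 (astar : R) (f : R -> R) : Prop :=
  ~ {ae mu, forall x : R, x \in oI astar -> f x = 0}.

Definition rayleigh (astar : R) (G : R -> R) (beta : R) (f g : R -> R) : \bar R :=
  ((\int[mu]_(x in oI astar)
      (x * G x * (g x) ^+ 2 + beta ^+ 2 * x / G x * (f x) ^+ 2)%:E) /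
   (\int[mu]_(x in oI astar) ((f x) ^+ 2)%:E))%E.

Definition kappa1 (astar : R) (G : R -> R) (beta : R) : \bar R :=
  ereal_inf [set r : \bar R | exists f g : R -> R,
     nonzero_L2 astar f /\ in_FG astar G f g /\ r = rayleigh astar G beta f g].
End Defs.

(* Main.v *)
Require Import Defs.
From HB Require Import structures.
From mathcomp Require Import all_boot all_order all_algebra.
From mathcomp Require Import all_classical all_reals all_analysis.
From mathcomp Require Import ring lra.
From mathcomp Require Import measurable_realfun.
Import Order.TTheory GRing.Theory Num.Theory.
Import numFieldNormedType.Exports.
Local Open Scope classical_set_scope.
Local Open Scope ring_scope.
Set Implicit Arguments. Unset Strict Implicit. Unset Printing Implicit Defensive.

Section Exp.
Variable R : realType.
Lemma expN_le1 (u : R) : 0 <= u -> expR (- u) <= 1.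
Proof. by move=> u0; rewrite expR_le1 oppr_le0. Qed.

Lemma expN_diff (u v : R) : 0 <= u -> u <= v ->
  0 <= expR (- u) - expR (- v) <= v - u.
Proof.
move=> u0 uv.
have -> : expR (- v) = expR (- u) * expR (- (v - u)).
  by rewrite -expRD; congr expR; ring.
have e1 := expN_le1 u0.
have e0 := expR_ge0 (- u).
have h1 := expR_ge1Dx (- (v - u)).
have h2 : expR (- (v - u)) <= 1 by apply: expN_le1; rewrite subr_ge0.
apply/andP; split.
  rewrite -{1}(mulr1 (expR (- u))) -mulrBr mulr_ge0// subr_ge0//.
rewrite -{1}(mulr1 (expR (- u))) -mulrBr.
apply: (le_trans (y := 1 * (1 - expR (- (v - u))))).
  by apply: ler_wpM2r; rewrite ?subr_ge0.
rewrite mul1r; lra.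
Qed.

Lemma expN_taylor (u : R) : 0 <= u -> 0 <= expR (- u) - 1 + u <= u ^+ 2.
Proof.
move=> u0; have h1 := expR_ge1Dx (- u).
apply/andP; split; first lra.
have h2 := expR_ge1Dx u.
have ep := expR_gt0 u.
have : expR (- u) <= (1 + u)^-1.
  rewrite expRN lef_pV2 ?posrE//; lra.
move=> h3.
have : (1 + u)^-1 <= 1 - u + u ^+ 2.
  rewrite -div1r ler_pdivrMr; last lra.
  have : 0 <= u ^+ 3 by rewrite exprn_ge0.
  move=> h4; have -> : (1 - u + u ^+ 2) * (1 + u) = 1 + u ^+ 3 by ring.
  lra.
move=> h4; lra.
Qed.
Local Notation mu := (@lebesgue_measure R).



Lemma mu_itv_fin (a b : R) : (mu `[a, b] < +oo)%E.
Proof.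
rewrite lebesgue_measure_itv/=; case: ifP => _ //; exact: ltry.
Qed.

Lemma intg (k : R -> R) (a b K : R) : measurable_fun setT k ->
  (forall x, a <= x -> x <= b -> `|k x| <= K) -> mu.-integrable `[a, b] (EFin \o k).
Proof.
move=> mk kK; apply: measurable_bounded_integrable => //.
- exact: mu_itv_fin.
- exact: measurable_funTS.
exists K; split; first by rewrite num_real.
move=> M KM x; rewrite /= in_itv/= => /andP[ax xb].
by rewrite (le_trans (kK _ ax xb))// ltW.
Qed.

Lemma addI (k : R -> R) (a c b K : R) : measurable_fun setT k ->
  (forall x, a <= x -> x <= b -> `|k x| <= K) -> a <= c -> c <= b ->
  \int[mu]_(x in `[a, b]) k x =
  \int[mu]_(x in `[a, c]) k x + \int[mu]_(x in `[c, b]) k x.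
Proof.
move=> mk kK ac cb.
have ik := intg mk kK.
have := @Rintegral_itvB R k (BLeft a) (BRight b) c ik.
rewrite !bnd_simp => /(_ ac cb) h.
rewrite -(@Rintegral_itv_obnd_cbnd R c (BRight b)); last first.
  apply: integrableS ik => //; apply: subset_itvr; by rewrite bnd_simp.
by rewrite -h addrC subrK.
Qed.

Lemma mu_itv (a b : R) : a <= b -> fine (mu `[a, b]) = b - a.
Proof.
move=> ab; rewrite lebesgue_measure_itv/= lte_fin.
have [ab'|ba] := ltP a b; first by [].
have -> : b = a by apply/le_anti; rewrite ba ab.
by rewrite subrr.
Qed.

Lemma boundI (k : R -> R) (a b K : R) : a <= b -> measurable_fun setT k ->
  (forall x, a <= x -> x <= b -> `|k x| <= K) ->
  `|\int[mu]_(x in `[a, b]) k x| <= K * (b - a).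
Proof.
move=> ab mk kK.
apply: (le_trans (le_normr_Rintegral _ (intg mk kK))) => //.
rewrite -(mu_itv ab) -(@Rintegral_cst _ _ _ mu `[a, b])//.
apply: le_Rintegral => //.
- apply: (@intg _ a b K) => //; first exact: measurableT_comp.
  by move=> x ax xb; rewrite normr_id; exact: kK.
- apply: (@intg _ a b `|K|) => //.
- by move=> x; rewrite /= in_itv/= => /andP[ax xb]; exact: kK.
Qed.
Lemma quad (D : R -> R) (A C : R) :
  (forall x y, 0 <= x -> x <= y -> y <= A -> `|D y - D x| <= C * (y - x)^+2) ->
  forall y, 0 <= y -> y <= A -> D y = D 0.
Proof.
move=> hD.
have hn : forall n x y, 0 <= x -> x <= y -> y <= A ->
    `|D y - D x| <= C / 2^+n * (y - x)^+2.
  elim=> [|n IH] x y x0 xy yA; first by rewrite expr0 divr1; exact: hD.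
  set m := (x + y) / 2.
  have xm : x <= m by rewrite /m; lra.
  have my : m <= y by rewrite /m; lra.
  apply: (le_trans (y := `|D y - D m| + `|D m - D x|)).
    by rewrite (_ : D y - D x = (D y - D m) + (D m - D x)) ?ler_normD//; ring.
  apply: (le_trans (lerD (IH m y _ my yA) (IH x m x0 xm _))).
  - exact: le_trans xm.
  - exact: le_trans yA.
  have p0 : (2:R)^+n != 0 by rewrite expf_neq0.
  rewrite /m (exprS 2 n) le_eqVlt; apply/orP; left; apply/eqP.
  move: p0; set t := (2:R)^+n => p0; field; exact: p0.
move=> y y0 yA.
apply/eqP; rewrite -subr_eq0 -normr_eq0; apply/eqP.
apply/le_anti; rewrite normr_ge0 andbT.
rewrite leNgt; apply/negP => he.
set e := `|D y - D 0| in he.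
have K0 : 0 <= `|C| * y ^+ 2 / e.
  apply: divr_ge0; [apply: mulr_ge0; [exact: normr_ge0|exact: sqr_ge0]|exact: ltW].
have hb := archi_boundP K0.
set n := Num.bound _ in hb.
have := hn n 0 y (lexx _) y0 yA; rewrite subr0 -/e => hle.
have : e <= `|C| * y^+2 / 2^+n.
  apply: (le_trans hle); rewrite mulrAC; apply: ler_wpM2r.
    by rewrite invr_ge0 exprn_ge0.
  apply: ler_wpM2r; [exact: sqr_ge0| exact: ler_norm].
rewrite ler_pdivlMr ?exprn_gt0// -ler_pdivlMl// mulrC => h2.
have : (n%:R : R) < 2 ^+ n.
  by rewrite -natrX ltr_nat ltn_expl.
move=> h4; have := lt_trans (lt_le_trans h4 h2) hb.
by rewrite ltxx.
Qed.

Section Prim.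
Variables (h : R -> R) (c0 : R).
Hypotheses (mh : measurable_fun setT h) (h0 : forall x, 0 <= h x)
  (hc : forall x, h x <= c0).
Definition H (y : R) := \int[mu]_(x in `[0, y]) h x.

Lemma hb x : `|h x| <= c0.
Proof. by rewrite ger0_norm. Qed.

Lemma H0 : H 0 = 0.
Proof. by rewrite /H set_itv1 Rintegral_set1. Qed.

Lemma Hneg y : y < 0 -> H y = 0.
Proof.
move=> y0; rewrite /H set_itv_ge ?Rintegral_set0// bnd_simp -ltNge//.
Qed.

Lemma Hdiff x y : 0 <= x -> x <= y -> H y - H x = \int[mu]_(s in `[x, y]) h s.
Proof.
move=> x0 xy; rewrite /H (@addI h 0 x y c0)//.
  by rewrite [LHS]addrC addKr.
by move=> s _ _; exact: hb.
Qed.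

Lemma Hge0 y : 0 <= H y.
Proof.
have [y0|y0] := ltP y 0; first by rewrite Hneg.
by apply: Rintegral_ge0 => x _; exact: h0.
Qed.

Lemma Hlip x y : 0 <= x -> x <= y -> 0 <= H y - H x <= c0 * (y - x).
Proof.
move=> x0 xy; rewrite Hdiff//; apply/andP; split.
  by apply: Rintegral_ge0 => s _; exact: h0.
apply: le_trans (ler_norm _) _.
by apply: boundI => // s _ _; exact: hb.
Qed.

Lemma Hmono : nondecreasing_fun H.
Proof.
move=> x y xy.
have [x0|x0] := ltP x 0; first by rewrite Hneg// Hge0.
by have /andP[+ _] := Hlip x0 xy; rewrite subr_ge0.
Qed.

Lemma mH : measurable_fun setT H.
Proof. exact: measurable_realfun.nondecreasing_measurable Hmono. Qed.

Lemma c0ge0 : 0 <= c0.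
Proof. exact: le_trans (h0 0) (hc 0). Qed.

Variable cc : R.
Hypothesis cc0 : 0 <= cc.
Definition E s := expR (- (cc * H s)).

Lemma E01 s : 0 < E s <= 1.
Proof.
rewrite /E expR_gt0 /= expN_le1// mulr_ge0//; exact: Hge0.
Qed.

Lemma Eb s : `|E s| <= 1.
Proof. by have /andP[e0 e1] := E01 s; rewrite gtr0_norm. Qed.

Lemma mE : measurable_fun setT E.
Proof.
apply: measurableT_comp; first exact: measurable_realfun.measurable_expR.
apply: measurableT_comp => //.
apply: measurableT_comp => //; exact: mH.
Qed.

Lemma Ediff x y : 0 <= x -> x <= y -> `|E y - E x| <= cc * c0 * (y - x).
Proof.
move=> x0 xy.
have /andP[d0 d1] := Hlip x0 xy.
have := @expN_diff (cc * H x) (cc * H y).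
rewrite mulr_ge0 ?Hge0// ler_wpM2l ?Hmono// => /(_ isT isT) /andP[e0 e1].
rewrite distrC ger0_norm // -/(E x) -/(E y).
apply: (le_trans e1); rewrite -mulrBr -mulrA.
by apply: ler_wpM2l.
Qed.

Lemma mEh : measurable_fun setT (fun s => E s * h s).
Proof. exact: measurable_realfun.measurable_funM mE mh. Qed.

Lemma Ehb s : `|E s * h s| <= c0.
Proof. by rewrite normrM -[c0]mul1r ler_pM ?Eb ?hb. Qed.

Lemma chain y : 0 <= y -> E y = 1 - cc * \int[mu]_(s in `[0, y]) (E s * h s).
Proof.
move=> y0.
pose D t := E t + cc * \int[mu]_(s in `[0, t]) (E s * h s).
suff : D y = D 0.
  have E0 : E 0 = 1 by rewrite /E H0 mulr0 oppr0 expR0.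
  rewrite /D set_itv1 Rintegral_set1 mulr0 addr0 E0 => hD.
  by rewrite -hD; ring.
apply: (@quad D y (2 * cc ^+ 2 * c0 ^+ 2)) => // x t x0 xt ty.
have ehb : forall s, 0 <= s -> s <= t -> `|E s * h s| <= c0 by move=> *; exact: Ehb.
rewrite /D (@addI _ 0 x t c0 mEh)//.
set J := \int[mu]_(s in `[x, t]) (E s * h s).
have hJ : J = E x * (H t - H x) + \int[mu]_(s in `[x, t]) ((E s - E x) * h s).
  have i1 : mu.-integrable `[x, t] (EFin \o (fun s => E s * h s)).
    by apply: (@intg _ _ _ c0) => //; [exact: mEh|move=> *; exact: Ehb].
  have i2 : mu.-integrable `[x, t] (EFin \o h).
    by apply: (@intg _ _ _ c0) => // *; exact: hb.
  have i3 : mu.-integrable `[x, t] (EFin \o (fun s => E x * h s)).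
    apply: (@intg _ _ _ c0) => //.
      by apply: measurable_realfun.measurable_funM => //; exact: measurable_cst.
    by move=> *; rewrite normrM -[c0]mul1r ler_pM ?Eb ?hb.
  under [in RHS]eq_Rintegral do rewrite mulrBl.
  rewrite RintegralB// RintegralZl// (Hdiff x0 xt).
  by rewrite /J; ring.
have hEt : E t = E x * expR (- (cc * (H t - H x))).
  by rewrite /E -expRD; congr expR; ring.
have -> : E t + cc * (\int[mu]_(s in `[0, x]) (E s * h s) + J) -
    (E x + cc * \int[mu]_(s in `[0, x]) (E s * h s)) =
    E x * (expR (- (cc * (H t - H x))) - 1 + cc * (H t - H x)) +
    cc * \int[mu]_(s in `[x, t]) ((E s - E x) * h s).
  by rewrite hEt hJ; ring.
have /andP[d0 d1] := Hlip x0 xt.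
have dd : 0 <= cc * (H t - H x) by rewrite mulr_ge0.
have /andP[q0 q1] := expN_taylor dd.
apply: (le_trans (ler_normD _ _)).
have b1 : `|E x * (expR (- (cc * (H t - H x))) - 1 + cc * (H t - H x))| <=
    (cc * c0 * (t - x)) ^+ 2.
  rewrite normrM -[_ ^+ 2]mul1r; apply: ler_pM => //; first exact: Eb.
  rewrite ger0_norm//; apply: (le_trans q1).
  rewrite -mulrA; apply: lerXn2r; rewrite ?nnegrE ?mulr_ge0 ?c0ge0 ?subr_ge0//.
  - by rewrite -subr_ge0.
  - exact: ler_wpM2l.
have b2 : `|cc * \int[mu]_(s in `[x, t]) ((E s - E x) * h s)| <=
    cc * ((cc * c0 * (t - x) * c0) * (t - x)).
  rewrite normrM ger0_norm//; apply: ler_wpM2l => //.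
  apply: boundI => //.
    apply: measurable_realfun.measurable_funM => //.
    apply: measurable_realfun.measurable_funB; first exact: mE.
    exact: measurable_cst.
  move=> s xs st; rewrite normrM; apply: ler_pM => //; last exact: hb.
  apply: (le_trans (Ediff x0 xs)).
  by apply: ler_wpM2l; [rewrite mulr_ge0 ?c0ge0|rewrite lerD2r].
apply: (le_trans (lerD b1 b2)).
rewrite le_eqVlt; apply/orP; left; apply/eqP; ring.
Qed.
End Prim.

Section IBP.
Variables (F k p dp : R -> R) (A KF Kk Kp Kq : R).
Hypotheses (A0 : 0 <= A) (mF : measurable_fun setT F) (mk : measurable_fun setT k)
  (mp : measurable_fun setT p) (mdp : measurable_fun setT dp)
  (Fk : forall x y, 0 <= x -> x <= y -> y <= A -> F y - F x = \int[mu]_(s in `[x, y]) k s)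
  (pdp : forall x y, 0 <= x -> x <= y -> y <= A -> p y - p x = \int[mu]_(s in `[x, y]) dp s)
  (bF : forall x, 0 <= x -> x <= A -> `|F x| <= KF)
  (bk : forall x, 0 <= x -> x <= A -> `|k x| <= Kk)
  (bp : forall x, 0 <= x -> x <= A -> `|p x| <= Kq)
  (bdp : forall x, 0 <= x -> x <= A -> `|dp x| <= Kp).

Let mM (f g : R -> R) : measurable_fun setT f -> measurable_fun setT g ->
  measurable_fun setT (fun s => f s * g s).
Proof. exact: measurable_realfun.measurable_funM. Qed.

Let bM (f g : R -> R) Kf Kg : (forall x, 0 <= x -> x <= A -> `|f x| <= Kf) ->
  (forall x, 0 <= x -> x <= A -> `|g x| <= Kg) ->
  forall x, 0 <= x -> x <= A -> `|f x * g x| <= Kf * Kg.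
Proof.
move=> hf hg x x0 xA; rewrite normrM ler_pM ?hf ?hg//.
Qed.

Let sub (f : R -> R) K x t : (forall x, 0 <= x -> x <= A -> `|f x| <= K) ->
  0 <= x -> t <= A -> forall s, x <= s -> s <= t -> `|f s| <= K.
Proof.
move=> hf x0 tA s xs st; apply: hf; [exact: le_trans xs|exact: le_trans tA].
Qed.

Let Kk0 : 0 <= Kk. Proof. exact: le_trans (normr_ge0 _) (bk (lexx 0) A0). Qed.
Let Kp0 : 0 <= Kp. Proof. exact: le_trans (normr_ge0 _) (bdp (lexx 0) A0). Qed.

Lemma ibp : \int[mu]_(s in `[0, A]) (F s * dp s) =
  F A * p A - F 0 * p 0 - \int[mu]_(s in `[0, A]) (k s * p s).
Proof.
pose D t := \int[mu]_(s in `[0, t]) (F s * dp s) - F t * p t +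
  \int[mu]_(s in `[0, t]) (k s * p s).
suff : D A = D 0.
  move=> hD.
  have hD0 : D 0 = - (F 0 * p 0) by rewrite /D !set_itv1 !Rintegral_set1; ring.
  have -> : \int[mu]_(s in `[0, A]) (F s * dp s) = D A - \int[mu]_(s in `[0, A]) (k s * p s) + F A * p A.
    by rewrite /D; ring.
  by rewrite hD hD0; ring.
apply: (@quad D A (2 * Kk * Kp)) => // x t x0 xt tA.
have t0 : 0 <= t by exact: le_trans xt.
have bFdp := bM bF bdp.
have bkp := bM bk bp.
rewrite /D (@addI _ 0 x t (KF * Kp) (mM mF mdp))//; last first.
  by move=> s s0 st; apply: bFdp => //; exact: le_trans tA.
rewrite (@addI _ 0 x t (Kk * Kq) (mM mk mp))//; last first.
  by move=> s s0 st; apply: bkp => //; exact: le_trans tA.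
have iFdp : mu.-integrable `[x, t] (EFin \o (fun s => F s * dp s)).
  exact: intg (mM mF mdp) (sub bFdp x0 tA).
have ikp : mu.-integrable `[x, t] (EFin \o (fun s => k s * p s)).
  exact: intg (mM mk mp) (sub bkp x0 tA).
have idp : mu.-integrable `[x, t] (EFin \o dp) by exact: intg mdp (sub bdp x0 tA).
have ik : mu.-integrable `[x, t] (EFin \o k) by exact: intg mk (sub bk x0 tA).
have e1 : F t * p t - F x * p x =
   \int[mu]_(s in `[x, t]) (F t * dp s) + \int[mu]_(s in `[x, t]) (k s * p x).
  rewrite RintegralZl// RintegralZr// -pdp// -Fk//; ring.
set I1 := \int[mu]_(s in `[0, x]) _.
set I2 := \int[mu]_(s in `[0, x]) _.
have -> : I1 + \int[mu]_(s in `[x, t]) (F s * dp s) - F t * p t +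
    (I2 + \int[mu]_(s in `[x, t]) (k s * p s)) - (I1 - F x * p x + I2) =
    (\int[mu]_(s in `[x, t]) (F s * dp s) - \int[mu]_(s in `[x, t]) (F t * dp s)) +
    (\int[mu]_(s in `[x, t]) (k s * p s) - \int[mu]_(s in `[x, t]) (k s * p x)).
  have : F t * p t = F t * p t - F x * p x + F x * p x by ring.
  move=> ->; rewrite e1; ring.
have iFtdp : mu.-integrable `[x, t] (EFin \o (fun s => F t * dp s)).
  apply: (intg (K := KF * Kp)) (mM (measurable_cst _) mdp) _.
  by move=> s xs st; rewrite normrM; apply: ler_pM => //; [exact: bF|exact: (sub bdp x0 tA)].
have ikpx : mu.-integrable `[x, t] (EFin \o (fun s => k s * p x)).
  apply: (intg (K := Kk * Kq)) (mM mk (measurable_cst _)) _.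
  by move=> s xs st; rewrite normrM; apply: ler_pM => //; [exact: (sub bk x0 tA)|apply: bp => //; exact: le_trans tA].
rewrite -!RintegralB//.
under eq_Rintegral do rewrite -mulrBl.
under [X in `|_ + X|]eq_Rintegral do rewrite -mulrBr.
apply: (le_trans (ler_normD _ _)).
have h1 : `|\int[mu]_(s in `[x, t]) ((F s - F t) * dp s)| <= (Kk * (t - x) * Kp) * (t - x).
  apply: boundI => //.
    by apply: mM => //; apply: measurable_realfun.measurable_funB => //; exact: measurable_cst.
  move=> s xs st; rewrite normrM; apply: ler_pM => //.
    rewrite distrC Fk//; last exact: le_trans xs.
    apply: (le_trans (boundI (K := Kk) st mk _)).
      by move=> z sz zt; apply: (sub bk x0 tA) => //; exact: le_trans sz.
    by apply: ler_wpM2l => //; rewrite lerD2l lerN2.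
  exact: (sub bdp x0 tA).
have h2 : `|\int[mu]_(s in `[x, t]) (k s * (p s - p x))| <= (Kk * (Kp * (t - x))) * (t - x).
  apply: boundI => //.
    by apply: mM => //; apply: measurable_realfun.measurable_funB => //; exact: measurable_cst.
  move=> s xs st; rewrite normrM; apply: ler_pM => //.
    exact: (sub bk x0 tA).
  rewrite pdp//; last exact: le_trans tA.
  apply: (le_trans (boundI (K := Kp) xs mdp _)).
    by move=> z xz zs; apply: (sub bdp x0 tA) => //; exact: le_trans st.
  by apply: ler_wpM2l => //; rewrite lerD2r.
apply: (le_trans (lerD h1 h2)).
rewrite le_eqVlt; apply/orP; left; apply/eqP; ring.
Qed.
End IBP.

Section Phi.
Variable phi : R -> R.
Hypothesis hphi : forall (n : nat) (x : R), derivable (derive1n n phi) x 1.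

Lemma dphi x : derivable phi x 1.
Proof. by have := @hphi 0%N x; rewrite derive1n0. Qed.
Lemma dphi' x : derivable (derive1 phi) x 1.
Proof. by have := @hphi 1%N x; rewrite derive1n1. Qed.

Lemma cont_der (g : R -> R) : (forall x, derivable g x 1) -> continuous g.
Proof.
move=> dg x; apply: differentiable_continuous; rewrite -derivable1_diffP.
exact: dg.
Qed.

Lemma cphi : continuous phi. Proof. exact: cont_der dphi. Qed.
Lemma cphi' : continuous (derive1 phi). Proof. exact: cont_der dphi'. Qed.

Lemma bound_cont (g : R -> R) (a b : R) : continuous g ->
  exists K, forall x, a <= x -> x <= b -> `|g x| <= K.
Proof.
move=> cg; have [ab|ba] := leP a b; last first.
  by exists 0 => x ax xb; have := le_lt_trans (le_trans ax xb) ba; rewrite ltxx.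
have cn : {within `[a, b], continuous (fun x => `|g x|)}.
  apply: continuous_subspaceT => x.
  exact: (continuous_comp (cg x) (@norm_continuous _ R^o (g x))).
have [c _ hc] := EVT_max ab cn.
exists `|g c| => x ax xb; apply: hc; by rewrite in_itv/= ax xb.
Qed.

Lemma ftc_phi x y : x <= y ->
  phi y - phi x = \int[mu]_(s in `[x, y]) (derive1 phi) s.
Proof.
rewrite le_eqVlt => /predU1P[<-|xy].
  by rewrite subrr set_itv1 Rintegral_set1.
rewrite /Rintegral (@continuous_FTC2 _ _ phi)//.
- by apply: continuous_subspaceT => z; exact: cphi'.
- split.
  + by move=> z _; exact: dphi.
  + exact/cvg_at_right_filter/cphi.
  + exact/cvg_at_left_filter/cphi.
Qed.

End Phi.
End Exp.

Section More. Variable R : realType. Local Notation mu := (@lebesgue_measure R).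

Lemma measurable_inv : measurable_fun setT (@GRing.inv R).
Proof.
have -> : [set: R] = (`]-oo, 0[ `|` `]0, +oo[) `|` [set 0].
  apply/seteqP; split => x //= _.
  have [x0|x0|->] := ltgtP x 0.
  - by left; left; rewrite /= in_itv/= x0.
  - by left; right; rewrite /= in_itv/= x0.
  - by right.
apply/(measurable_funU _ (measurableU _ _ (measurable_itv _) (measurable_itv _)) (measurable_set1 _)).
split; last exact: measurable_fun_set1.
apply/(measurable_funU _ (measurable_itv _) (measurable_itv _)).
split; apply: measurable_realfun.open_continuous_measurable_fun;
  try exact: interval_open.
- move=> x; rewrite inE/= in_itv/= => x0; apply: inv_continuous.
  by rewrite lt_eqF.
- move=> x; rewrite inE/= in_itv/= andbT => x0; apply: inv_continuous.
  by rewrite gt_eqF.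
Qed.

Lemma conv (k : R -> R) (A K : R) : measurable_fun setT k ->
  (forall x, 0 <= x -> x <= A -> `|k x| <= K) ->
  (\int[mu]_(x in oI A) (k x)%:E)%E = (\int[mu]_(x in `[0, A]) k x)%:E.
Proof.
move=> mk kK.
have ik := intg mk (fun x (hx : 0 <= x) => kK x hx).
rewrite integral_itv_obnd_cbnd; last first.
  by apply/measurable_EFinP; exact: measurable_funTS.
rewrite integral_itv_bndo_bndc; last first.
  by apply/measurable_EFinP; exact: measurable_funTS.
by rewrite /Rintegral fineK// integrable_fin_num.
Qed.
End More.

Section More2.
Variable R : realType.
Local Notation mu := (@lebesgue_measure R).
Variables (h : R -> R) (c0 : R).
Hypotheses (mh : measurable_fun setT h) (h0 : forall x, 0 <= h x)
  (hc : forall x, h x <= c0).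

Lemma Eint cc (cc0 : 0 <= cc) x y : 0 <= x -> x <= y ->
  E h cc y - E h cc x = \int[mu]_(s in `[x, y]) (- cc * (E h cc s * h s)).
Proof.
move=> x0 xy.
rewrite (chain mh h0 hc cc0 (le_trans x0 xy)) (chain mh h0 hc cc0 x0).
rewrite (@addI _ (fun s => E h cc s * h s) 0 x y c0)//; last 2 first.
- exact: mEh.
- by move=> s _ _; exact: Ehb.
rewrite RintegralZl//; first ring.
apply: (@intg _ _ _ _ c0); first exact: mEh.
by move=> s _ _; exact: Ehb.
Qed.
End More2.

Unset Implicit Arguments.

Theorem mainTheorem15 (R : realType) (astar : R) (G : R -> R) (beta : R) :
  0 < astar ->
  measurable_fun `[0, astar] G ->
  (exists M : R, forall x : R, x \in `[0, astar] -> 0 <= G x <= M) ->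
  {ae (@lebesgue_measure R), forall x : R, x \in `[0, astar] -> 4 * pi <= G x} ->
  0 < beta ->
  (kappa1 astar G beta < beta%:E)%E.
Proof.
move=> A0 mG [M hM] hae b0.
pose mu := @lebesgue_measure R.
pose c4 : R := 4 * pi.
have c40 : 0 < c4 by rewrite mulr_gt0// pi_gt0.
pose k0 := fun t : R => (Num.max t c4)^-1.
have maxpos t : 0 < Num.max t c4 by rewrite lt_max c40 orbT.
pose h := (fun x => k0 (G x)) \_ `[0, astar].
have mh : measurable_fun setT h.
  apply/(measurable_restrictT _ (measurable_itv _)).
  apply: measurableT_comp mG; apply: nonincreasing_measurable => //.
  move=> x y xy; rewrite /k0 lef_pV2 ?posrE//.
  by rewrite ge_max !le_max xy lexx !orbT.
have h0 x : 0 <= h x.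
  by rewrite /h patchE; case: ifP => // _; rewrite /k0 invr_ge0 ltW.
have hc x : h x <= c4^-1.
  rewrite /h patchE; case: ifP => _; last by rewrite invr_ge0 ltW.
  by rewrite /k0 lef_pV2 ?posrE// le_max lexx orbT.
pose f := E h beta.
pose u := E h (2 * beta).
pose g := fun x => - beta * (f x * h x).
have b0' : 0 <= beta := ltW b0.
have b20 : 0 <= 2 * beta by rewrite mulr_ge0.
have fu x : f x ^+ 2 = u x.
  by rewrite /f /u /E expr2 -expRD; congr expR; ring.
have mf : measurable_fun setT f := mE mh h0 hc beta.
have mu' : measurable_fun setT u := mE mh h0 hc (2 * beta).
have mg : measurable_fun setT g.
  apply: measurable_funM => //; exact: mEh mh h0 hc beta.
have fb x : `|f x| <= 1 := Eb h0 b0' x.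
have ub x : `|u x| <= 1 := Eb h0 b20 x.
have hb' x : `|h x| <= c4^-1 by rewrite ger0_norm.
have gb x : `|g x| <= beta * c4^-1.
  rewrite /g normrM normrN (gtr0_norm b0) ler_wpM2l// normrM -[c4^-1]mul1r.
  by rewrite ler_pM.
have oIsub : oI astar `<=` `[0, astar].
  by move=> x; rewrite /oI /= !in_itv/= => /andP[x0 xA]; rewrite !ltW.
have finI (k : R -> R) K : measurable_fun setT k ->
    (forall x, 0 <= x -> x <= astar -> `|k x| <= K) ->
    (\int[mu]_(x in oI astar) (k x)%:E < +oo)%E.
  by move=> mk kK; rewrite (conv mk kK) ltry.
have nz : nonzero_L2 astar f.
  move=> hz.
  have : mu.-negligible (oI astar).
    apply: negligibleS hz => x /= xo hx.
    have := E01 h0 b0' x; rewrite -/f (hx (mem_set xo)) ltxx //.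
  move=> hn; have := (negligibleP mu (measurable_itv `]0, astar[)).1 hn.
  rewrite /mu /= lebesgue_measure_itv/= lte_fin A0 /= => /eqP.
  by rewrite oppr0 adde0 eqe gt_eqF.
have L2f : L2 astar f.
  split; first exact: measurable_funTS.
  apply: (@finI (fun x => f x ^+ 2) 1); first exact: measurable_funX.
  by move=> x _ _; rewrite fu ub.
have Fk x y : 0 <= x -> x <= y -> y <= astar ->
    f y - f x = \int[mu]_(s in `[x, y]) g s.
  by move=> x0 xy _; exact: (Eint mh h0 hc b0' x0 xy).
have dd : distr_deriv astar f g.
  split.
    move=> c d c0 cd dA; exact: (@intg _ g c d _ mg (fun x _ _ => gb x)).
  move=> phi [hphi [c [d [c0 [cd [dA supp]]]]]].
  have [Kp hKp] := bound_cont 0 astar (cphi' hphi).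
  have [Kq hKq] := bound_cont 0 astar (cphi hphi).
  have mp : measurable_fun setT phi.
    exact: continuous_measurable_fun (cphi hphi).
  have mdp : measurable_fun setT (derive1 phi).
    exact: continuous_measurable_fun (cphi' hphi).
  rewrite (@conv _ (fun x => f x * derive1 phi x) astar (1 * Kp)); last 2 first.
  - exact: measurable_funM.
  - by move=> x x0 xA; rewrite normrM ler_pM ?hKp.
  rewrite (@conv _ (fun x => g x * phi x) astar (beta * c4^-1 * Kq)); last 2 first.
  - exact: measurable_funM.
  - by move=> x x0 xA; rewrite normrM ler_pM ?hKq.
  rewrite -EFinN; congr EFin.
  rewrite (@ibp _ f g phi (derive1 phi) astar 1 (beta * c4^-1) Kp Kq) //.
  - have -> : phi astar = 0 by apply: supp; right.
    have -> : phi 0 = 0 by apply: supp; left.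
    by rewrite !mulr0 !subr0 sub0r.
  - exact: ltW.
  - by move=> x y x0 xy yA; exact: ftc_phi.
have mGo : measurable_fun (oI astar) G.
  exact: measurable_funS mG.
have FG : in_FG astar G f g.
  split; [exact: L2f|split; [exact: dd|]].
  have io : mu.-integrable (oI astar) (fun x => ((g x) ^+ 2 * x * G x)%:E).
    apply: (@measurable_bounded_integrable _ _ _ mu (fun x => g x ^+ 2 * x * G x) (oI astar) (measurable_itv _)).
    - by rewrite /mu /= lebesgue_measure_itv/=; case: ifP => _ //; exact: ltry.
    - apply: measurable_funM => //; apply: measurable_funM => //.
      exact: measurable_funTS (measurable_funX _ mg).
    exists ((beta * c4^-1) ^+ 2 * astar * M); split; first by rewrite num_real.
    move=> K KK x xo.
    have /andP[G0 GM] := hM x (oIsub x xo).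
    move: xo; rewrite /oI /= in_itv/= => /andP[x0 xA].
    apply: ltW; apply: le_lt_trans KK.
    rewrite normrM normrM normrX (gtr0_norm x0) (ger0_norm G0).
    have gx := gb x.
    apply: ler_pM => //.
      by apply: mulr_ge0; [apply: exprn_ge0|exact: ltW].
    apply: ler_pM => //; [exact: ltW| |exact: ltW].
    rewrite lerXn2r ?nnegrE//; apply: mulr_ge0; [exact: ltW|].
    by rewrite invr_ge0 ltW.
  have := integrable_fin_num _ io.
  by move=> /(_ (measurable_itv _)) /fin_numPlt/andP [].
pose Iu := \int[mu]_(s in `[0, astar]) u s.
pose Iw := \int[mu]_(s in `[0, astar]) (u s * h s * s).
have uhb x : 0 <= x -> x <= astar -> `|u x * h x * x| <= 1 * c4^-1 * astar.
  move=> x0 xA; rewrite normrM normrM (ger0_norm x0).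
  apply: ler_pM; [exact: mulr_ge0 (normr_ge0 _) (normr_ge0 _)|exact: x0|
    exact: ler_pM (normr_ge0 _) (normr_ge0 _) (ub x) (hb' x)|exact: xA].
have muh : measurable_fun setT (fun s => u s * h s * s).
  by apply: measurable_funM => //; exact: measurable_funM.
have den : (\int[mu]_(x in oI astar) ((f x) ^+ 2)%:E)%E = Iu%:E.
  under eq_integral do rewrite fu.
  by rewrite (@conv _ u astar 1).
have num : (\int[mu]_(x in oI astar)
      (x * G x * (g x) ^+ 2 + beta ^+ 2 * x / G x * (f x) ^+ 2)%:E)%E =
    ((2 * beta ^+ 2) * Iw)%:E.
  rewrite (@ae_eq_integral _ _ _ mu (oI astar) (fun x => ((2 * beta ^+ 2) * (u x * h x * x))%:E)
    (fun x => (x * G x * (g x) ^+ 2 + beta ^+ 2 * x / G x * (f x) ^+ 2)%:E)).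
  - rewrite (@conv _ (fun x => (2 * beta ^+ 2) * (u x * h x * x)) astar
      ((2 * beta ^+ 2) * (1 * c4^-1 * astar))).
    + by rewrite RintegralZl//; apply: (intg muh uhb).
    + by apply: measurable_funM.
    + move=> x x0 xA; rewrite normrM ler_pM ?uhb//.
      by rewrite ger0_norm// mulr_ge0// exprn_ge0.
  - exact: measurable_itv.
  - apply/measurable_EFinP; apply: measurable_funD.
    + apply: measurable_funM; last exact: measurable_funTS (measurable_funX _ mg).
      by apply: measurable_funM => //; exact: measurable_id.
    + apply: measurable_funM; last exact: measurable_funTS (measurable_funX _ mf).
      have mGi : measurable_fun (oI astar) (fun x => (G x)^-1).
        exact: (measurableT_comp (@measurable_inv R) mGo).
      apply: measurable_funM; last exact: mGi.
      by apply: measurable_funM => //; exact: measurable_id.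
  - by apply/measurable_EFinP; apply: measurable_funTS; apply: measurable_funM.
  - apply: (negligibleS _ hae) => x /= nQ hx; apply: nQ => xo.
    have xi := oIsub x xo.
    have G4 := hx xi.
    have Gp : 0 < G x by apply: lt_le_trans G4.
    have hxe : h x = (G x)^-1.
      by rewrite /h patchE (mem_set xi) /k0 max_l.
    congr EFin; rewrite /g hxe -fu; field.
    by rewrite gt_eqF.
have hibp : Iu = astar * u astar + 2 * beta * Iw.
  have := @ibp _ u (fun s => - (2 * beta) * (u s * h s)) id (fun _ => 1) astar 1
    (2 * beta * c4^-1) 1 astar (ltW A0) mu'
    (measurable_funM (measurable_cst _) (mEh mh h0 hc (2 * beta)))
    (@measurable_id _ _ setT) (measurable_cst _).
  have Fk' x y : 0 <= x -> x <= y -> y <= astar ->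
      u y - u x = \int[mu]_(s in `[x, y]) (- (2 * beta) * (u s * h s)).
    by move=> x0 xy _; exact: (Eint mh h0 hc b20 x0 xy).
  have pdp x y : 0 <= x -> x <= y -> y <= astar ->
      id y - id x = \int[mu]_(s in `[x, y]) (fun _ : R => 1) s.
    by move=> x0 xy _; rewrite Rintegral_cst// mul1r mu_itv.
  move=> /(_ Fk' pdp (fun x _ _ => ub x)).
  have bk x : 0 <= x -> x <= astar -> `|- (2 * beta) * (u x * h x)| <= 2 * beta * c4^-1.
    move=> _ _; rewrite normrM normrN (ger0_norm b20); apply: ler_wpM2l => //.
    rewrite normrM -[c4^-1]mul1r.
    exact: ler_pM (normr_ge0 _) (normr_ge0 _) (ub x) (hb' x).
  move=> /(_ bk).
  have bp x : 0 <= x -> x <= astar -> `|id x| <= astar by move=> x0 xA; rewrite ger0_norm.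
  have bdp (x : R) : 0 <= x -> x <= astar -> `|1 : R| <= 1 by rewrite normr1.
  move=> /(_ bp bdp).
  under eq_Rintegral do rewrite mulr1.
  rewrite -/Iu mulr0 subr0.
  have -> : \int[mu]_(s in `[0, astar]) (- (2 * beta) * (u s * h s) * id s) = - (2 * beta) * Iw.
    rewrite -RintegralZl//; last exact: (intg muh uhb).
    by apply: eq_Rintegral => x _ /=; ring.
  by move=> ->; ring.
have Iw0 : 0 <= Iw.
  apply: Rintegral_ge0 => x; rewrite /= in_itv/= => /andP[x0 _].
  have /andP[u0 _] := E01 h0 b20 x.
  by rewrite mulr_ge0// mulr_ge0// ltW.
have uA : 0 < u astar by have /andP[] := E01 h0 b20 astar.
have Iu0 : 0 < Iu.
  rewrite hibp; apply: (lt_le_trans (mulr_gt0 A0 uA)).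
  by rewrite lerDl mulr_ge0.
have hr : (rayleigh astar G beta f g < beta%:E)%E.
  rewrite /rayleigh num den inver (gt_eqF Iu0) lte_pdivrMr// -EFinM lte_fin.
  rewrite hibp mulrDr.
  have -> : beta * (2 * beta * Iw) = 2 * beta ^+ 2 * Iw by ring.
  by rewrite ltrDr mulr_gt0// mulr_gt0.
rewrite /kappa1; apply: le_lt_trans hr; apply: ge_ereal_inf.
exists (rayleigh astar G beta f g) => //.
by exists f, g; split => //; split.
Qed.
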